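(* Let $X_1, X_2, \dots$ be i.i.d. random variables with $\mathbb{P}(X_1 = l) = p_l$ for $l \in \mathbb{Z}^+$. Fix integers $k \ge 1$ and $0 \le j \le k$, and let $n \ge k+1$. Then \[ \mathbb{P}(X_n \in R_j^k) = \sum_{i} \binom{k}{j} S_i^{j} (C_{i-1})^{k-j} p_i , \] and consequently, for every $i \in \mathbb{Z}^+$, \[ q_i := \mathbb{P}(X_n = i \mid X_n \in R_j^k) = \frac{\binom{k}{j} S_i^j (C_{i-1})^{k-j} p_i}{\sum_{l} \binom{k}{j} S_l^{j} (C_{l-1})^{k-j} p_l}. \]
   Context: For $i \in \mathbb{Z}^+$, $S_i = \mathbb{P}(X_1 \ge i) = \sum_{s \ge i} p_s$ and $C_i = \mathbb{P}(X_1 \le i) = \sum_{l=1}^{i} p_l$, with $C_0 = 0$ (so $S_i + C_{i-1} = 1$); sums over $i$ or $l$ range over $\mathbb{Z}^+$, and $0^0 = 1$. For $n \ge k+1$, $X_n$ is called a $j$-recent-$k$-record, written $X_n \in R_j^k$, if exactly $j$ of the $k$ values $X_{n-k}, X_{n-k+1}, \dots, X_{n-1}$ are at least as large as $X_n$, i.e. $|\{p : 1 \le p \le k,\ X_{n-p} \ge X_n\}| = j$. *)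

(* Defs.v *)
From HB Require Import structures.
From mathcomp Require Import all_boot all_order all_algebra.
From mathcomp Require Import all_classical all_reals all_analysis.
Set Implicit Arguments. Unset Strict Implicit. Unset Printing Implicit Defensive.
Import Order.TTheory GRing.Theory Num.Theory.
Local Open Scope classical_set_scope.
Local Open Scope ring_scope.

Definition Stail (R : realType) (p : nat -> R) (i : nat) : R :=
  fine (\sum_(i <= s <oo) (p s)%:E)%E.

Definition Ccum (R : realType) (p : nat -> R) (i : nat) : R :=
  \sum_(1 <= l < i.+1) p l.

(* The summand binom(k,j) S_i^j C_{i-1}^{k-j} p_i  (note 0^0 = 1 for ^+) *)
Definition rterm (R : realType) (p : nat -> R) (k j i : nat) : R :=
  'C(k, j)%:R * Stail p i ^+ j * Ccum p i.-1 ^+ (k - j) * p i.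

(* the event X_n \in R_j^k : exactly j of X_{n-1},...,X_{n-k} are >= X_n *)
Definition recent_record (T : Type) (X : nat -> T -> nat) (k j n : nat) : set T :=
  [set t | count (fun q => (X n t <= X (n - q)%N t)%N) (iota 1 k) = j].

Definition iid_pos_seq (R : realType) (d : measure_display) (T : measurableType d)
    (P : probability T R) (X : nat -> T -> nat) (p : nat -> R) : Prop :=
  [/\ (forall m (A : set nat), (0 < m)%N -> measurable (X m @^-1` A)),
      (forall m, (0 < m)%N -> P (X m @^-1` [set 0%N]) = 0%E),
      (forall m l, (0 < m)%N -> (0 < l)%N -> P (X m @^-1` [set l]) = (p l)%:E) &
      (forall (s : seq nat) (A : nat -> set nat), uniq s -> all (fun m => 0 < m)%N s ->
         P (\bigcap_(m in [set m | m \in s]) (X m @^-1` A m)) =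
         (\prod_(m <- s) P (X m @^-1` A m))%E)].

(* Main.v *)
Require Import Defs.
From HB Require Import structures.
From mathcomp Require Import all_boot all_order all_algebra.
From mathcomp Require Import all_classical all_reals all_analysis.
Import Order.TTheory GRing.Theory Num.Theory.
Local Open Scope classical_set_scope.
Local Open Scope ring_scope.
From mathcomp Require Import ring zify.
Lemma in_bigsetU (T : Type) (I : eqType) (r : seq I) (F : I -> set T) t :
  (\big[setU/set0]_(x <- r) F x) t <-> exists2 x, x \in r & F x t.
Proof.
elim: r => [|a r IH]; first by rewrite big_nil; split => // -[].
rewrite big_cons; split.
- case=> [Ft|/IH [x xr Fx]]; first by exists a; rewrite ?mem_head.
  by exists x => //; rewrite in_cons xr orbT.
- move=> [x]; rewrite in_cons => /orP [/eqP -> Fa|xr Fx]; first by left.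
  by right; apply/IH; exists x.
Qed.

Lemma measure_seqU d (T : measurableType d) (R : realType)
  (mu : {measure set T -> \bar R}) (I : eqType) (r : seq I) (F : I -> set T) :
  uniq r -> (forall x, x \in r -> measurable (F x)) ->
  (forall x y, x \in r -> y \in r -> x != y -> F x `&` F y = set0) ->
  mu (\big[setU/set0]_(x <- r) F x) = (\sum_(x <- r) mu (F x))%E.
Proof.
elim: r => [|a r IH]; first by rewrite !big_nil measure0.
rewrite /= => /andP [anr ur] mF dF.
have mFr : forall x, x \in r -> measurable (F x).
  by move=> x xr; apply: mF; rewrite in_cons xr orbT.
rewrite !big_cons measureU.
- congr (_ + _)%E; apply: IH => // x y xr yr.
  by apply: dF; rewrite in_cons ?xr ?yr orbT.
- by apply: mF; rewrite mem_head.
- by rewrite big_seq; apply: bigsetU_measurable => x /mFr.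
- apply/seteqP; split => // t [Fat /in_bigsetU [x xr Fxt]].
  have := dF a x; rewrite mem_head in_cons xr orbT => /(_ isT isT).
  have -> : a != x by apply: contraNneq anr => ->.
  by move=> /(_ isT) E; rewrite -E.
Qed.
Lemma count_iota1 (f : nat -> bool) k : count f (iota 1 k) = #|[set q : 'I_k | f q.+1]%SET|.
Proof.
have -> : iota 1 k = map (addn 1) (iota 0 k) by rewrite -iotaDl.
rewrite count_map -val_enum_ord count_map -sum1_count -sum1_card.
rewrite big_enum_cond /=.
by apply: eq_bigl => q; rewrite inE.
Qed.

Definition EB (T : Type) (X : nat -> T -> nat) (n k i : nat) (B : {set 'I_k}) : set T :=
  [set t | X n t = i /\ forall q : 'I_k, (i <= X (n - q.+1) t)%N = (q \in B)].
Arguments EB {T}.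

Lemma rec_decomp (T : Type) (X : nat -> T -> nat) (n k j i : nat) :
  X n @^-1` [set i] `&` recent_record X k j n =
  \big[setU/set0]_(B <- enum [set B : {set 'I_k} | #|B| == j]%SET) EB X n k i B.
Proof.
apply/seteqP; split => t.
- move=> [/= Xi]; rewrite /recent_record /= count_iota1 Xi => cj.
  apply/in_bigsetU; exists [set q : 'I_k | (i <= X (n - q.+1) t)%N]%SET.
    by rewrite mem_enum inE cj.
  by split => // q; rewrite inE.
- move=> /in_bigsetU [B]; rewrite mem_enum inE => /eqP cB [Xi HB].
  split => //; rewrite /recent_record /= count_iota1 Xi -cB.
  by apply: eq_card => q; rewrite inE HB.
Qed.

Lemma EB_disj (T : Type) (X : nat -> T -> nat) (n k i : nat) (B B' : {set 'I_k}) :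
  B != B' -> EB X n k i B `&` EB X n k i B' = set0.
Proof.
move=> nB; apply/seteqP; split => // t [[_ H1] [_ H2]].
by case/eqP: nB; apply/setP => q; rewrite -H1 -H2.
Qed.
Lemma L_ge (R : realType) (d : measure_display) (T : measurableType d)
    (P : probability T R) (X : nat -> T -> nat) (p : nat -> R) (m i : nat) :
  iid_pos_seq P X p -> (0 < m)%N -> (0 < i)%N ->
  P (X m @^-1` [set x | (i <= x)%N]) = (Stail p i)%:E.
Proof.
move=> [mX X0 Xp _] m0 i0.
have -> : X m @^-1` [set x | (i <= x)%N] =
    \bigcup_(s in [set s | (i <= s)%N]) X m @^-1` [set s].
  by apply/seteqP; split => t /=; [move=> h; exists (X m t)|move=> [s /= h ->]].
have E : (\sum_(i <= s <oo) (p s)%:E = \sum_(0 <= s <oo | s \in [set s | (i<=s)%N])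
     P (X m @^-1` [set s]))%E.
  rewrite [LHS]eseries_cond; apply: congr_lim; apply/funext => N.

  apply: eq_big => s; first by rewrite /= mem_setE.
  by move=> /andP[_ h]; rewrite Xp // (leq_trans i0 h).
rewrite /Stail E -measure_bigcup.
- rewrite fineK //; apply: fin_num_measure.
  by apply: bigcup_measurable => s _; apply: mX.
- by move=> s _; apply: mX.
- by move=> a b _ _ [t [/= <- <-]].
Qed.

Lemma L_lt (R : realType) (d : measure_display) (T : measurableType d)
    (P : probability T R) (X : nat -> T -> nat) (p : nat -> R) (m i : nat) :
  iid_pos_seq P X p -> (0 < m)%N -> (0 < i)%N ->
  P (X m @^-1` [set x | (x < i)%N]) = (Ccum p i.-1)%:E.
Proof.
move=> [mX X0 Xp _] m0 i0.
have -> : X m @^-1` [set x | (x < i)%N] =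
    \big[setU/set0]_(l < i) X m @^-1` [set nat_of_ord l].
  rewrite -(bigcup_mkord i (fun l => X m @^-1` [set l])).
  by apply/seteqP; split => t /=; [move=> h; exists (X m t)|move=> [s /= h ->]].
rewrite (@measure_bigsetU _ _ _ P (fun l => X m @^-1` [set l])); last first.
- by move=> a b _ _ [t [/= <- <-]].
- by move=> l; apply: mX.
case: i i0 => // i _ /=.
rewrite big_ord_recl /= X0 // add0e /Ccum.
rewrite big_add1 /= big_mkord -sumEFin; apply: eq_bigr => l _.
by rewrite Xp.
Qed.
Lemma prod_ifB (R : realType) k (B : {set 'I_k}) (a b : R) :
  \prod_(q < k) (if q \in B then a else b) = a ^+ #|B| * b ^+ (k - #|B|).
Proof.
rewrite (bigID (mem B)) /=.
rewrite (eq_bigr (fun=> a)); last by move=> q ->.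
rewrite [X in _ * X](eq_bigr (fun=> b)); last by move=> q /negbTE ->.
rewrite !prodr_const; congr (_ * _ ^+ _).
have h := cardC (mem B); rewrite card_ord in h; rewrite -[X in (X - _)%N]h.
rewrite addKn; apply: eq_card => q; rewrite !inE.
by rewrite !unfold_in /=.
Qed.

Definition sB (n k : nat) (B : {set 'I_k}) (i m : nat) : set nat :=
  if m == n then [set i]
  else if (n - m)%N.-1 \in [seq val q | q <- enum B] then [set x | (i <= x)%N]
  else [set x | (x < i)%N].

Definition seqn (n k : nat) : seq nat := n :: [seq (n - q.+1)%N | q <- iota 0 k].

Lemma sB_q n k (B : {set 'I_k}) i (q : 'I_k) : (k < n)%N ->
  sB n k B i (n - q.+1)%N =
  if q \in B then [set x | (i <= x)%N] else [set x | (x < i)%N].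
Proof.
move=> kn; have qn : (q.+1 <= n)%N by apply: leq_trans kn; rewrite ltnS ltnW.
rewrite /sB ifF; last first.
  apply/negbTE; rewrite neq_ltn; apply/orP; left.
  by rewrite ltn_subrL /= (leq_trans _ qn).
by rewrite subKn //= (mem_map val_inj) mem_enum.
Qed.

Lemma EB_bigcap (T : Type) (X : nat -> T -> nat) n k i (B : {set 'I_k}) : (k < n)%N ->
  EB X n k i B = \bigcap_(m in [set m | m \in seqn n k]) X m @^-1` sB n k B i m.
Proof.
move=> kn; apply/seteqP; split => t.
- move=> [Xi HB] m /=; rewrite /seqn in_cons => /orP [/eqP ->|].
    by rewrite /sB eqxx.
  move=> /mapP [q]; rewrite mem_iota add0n => /andP[_ qk] ->.
  rewrite (_ : q = val (Ordinal qk)) // sB_q // -HB /=.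
  by case: ifP => //= /negbT; rewrite -ltnNge.
- move=> H; split.
    by have := H n; rewrite /sB eqxx; apply; rewrite /= /seqn mem_head.
  move=> q; have := H (n - q.+1)%N.
  rewrite sB_q //= /seqn in_cons; case: ifP => qB /=.
    by move=> h; apply: h; apply/orP; right; apply/mapP; exists (val q); rewrite // mem_iota add0n ltn_ord.
  move=> h; apply/negbTE; rewrite -ltnNge; apply: h.
  by apply/orP; right; apply/mapP; exists (val q); rewrite // mem_iota add0n ltn_ord.
Qed.
Lemma seqn_pos n k m : (k < n)%N -> m \in seqn n k -> (0 < m)%N.
Proof.
move=> kn; rewrite /seqn in_cons => /orP [/eqP ->|/mapP [q]].
  exact: leq_ltn_trans kn.
by rewrite mem_iota add0n => /andP [_ qk] ->; rewrite subn_gt0 (leq_ltn_trans qk).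
Qed.

Lemma seqn_uniq n k : (k < n)%N -> uniq (seqn n k).
Proof.
move=> kn; rewrite /seqn /=; apply/andP; split.
  apply/mapP => -[q]; rewrite mem_iota add0n => /andP [_ qk] h; lia.
rewrite map_inj_in_uniq ?iota_uniq // => a b; rewrite !mem_iota !add0n.
move=> /andP[_ ak] /andP [_ bk] h; lia.
Qed.

Lemma EB_meas (R : realType) (d : measure_display) (T : measurableType d)
    (P : probability T R) (X : nat -> T -> nat) (p : nat -> R) n k i (B : {set 'I_k}) :
  iid_pos_seq P X p -> (k < n)%N -> d.-measurable (EB X n k i B).
Proof.
move=> [mX _ _ _] kn; rewrite EB_bigcap //; apply: bigcap_measurableType => m /= ms.
by apply: mX; apply: seqn_pos ms.
Qed.

Lemma EB_P (R : realType) (d : measure_display) (T : measurableType d)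
    (P : probability T R) (X : nat -> T -> nat) (p : nat -> R) n k i (B : {set 'I_k}) :
  iid_pos_seq P X p -> (k < n)%N -> (0 < i)%N ->
  P (EB X n k i B) = (p i * Stail p i ^+ #|B| * Ccum p i.-1 ^+ (k - #|B|))%:E.
Proof.
move=> H kn i0; have [mX X0 Xp Hind] := H.
rewrite EB_bigcap // Hind; last 2 first.
- exact: seqn_uniq.
- by apply/allP => m; apply: seqn_pos.
rewrite /seqn big_cons big_map {1}/sB eqxx Xp //; last exact: leq_ltn_trans kn.
rewrite (_ : iota 0 k = index_iota 0 k); last by rewrite /index_iota subn0.
rewrite big_mkord.
rewrite (eq_bigr (fun q : 'I_k => (if q \in B then Stail p i else Ccum p i.-1)%:E)).
  by rewrite prodEFin prod_ifB -EFinM mulrA.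
move=> q _; rewrite sB_q //.
have q0 : (0 < n - q.+1)%N by rewrite subn_gt0 (leq_ltn_trans _ kn).
by case: ifP => _; [apply: L_ge | apply: L_lt].
Qed.

Lemma key (R : realType) (d : measure_display) (T : measurableType d)
    (P : probability T R) (X : nat -> T -> nat) (p : nat -> R) (k j n i : nat) :
  iid_pos_seq P X p -> (k < n)%N -> (0 < i)%N ->
  P (X n @^-1` [set i] `&` recent_record X k j n) = (rterm p k j i)%:E.
Proof.
move=> H kn i0.
rewrite rec_decomp measure_seqU ?enum_uniq //; last first.
- by move=> B B' _ _; apply: EB_disj.
- by move=> B _; apply: EB_meas H kn.
rewrite (eq_big_seq (fun _ => (p i * Stail p i ^+ j * Ccum p i.-1 ^+ (k - j))%:E)); last first.
  by move=> B; rewrite mem_enum inE => /eqP <-; apply: EB_P.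
rewrite sumEFin big_enum /= sumr_const card_draws card_ord /rterm -mulr_natl.
congr EFin; ring.
Qed.
Theorem theorem2 (R : realType) (d : measure_display) (T : measurableType d)
    (P : probability T R) (X : nat -> T -> nat) (p : nat -> R) (k j n : nat) :
  iid_pos_seq P X p -> (1 <= k)%N -> (j <= k)%N -> (k + 1 <= n)%N ->
  P (recent_record X k j n) = (\sum_(1 <= i <oo) (rterm p k j i)%:E)%E /\
  (forall i : nat, (0 < i)%N ->
     fine (P (X n @^-1` [set i] `&` recent_record X k j n)) /
       fine (P (recent_record X k j n))
     = rterm p k j i / fine (\sum_(1 <= l <oo) (rterm p k j l)%:E)%E).
Proof.
move=> H k1 jk; rewrite addn1 => kn.
have [mX X0 Xp _] := H.
set F := fun i => X n @^-1` [set i] `&` recent_record X k j n.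
have mF : forall i, d.-measurable (F i).
  move=> i; rewrite /F rec_decomp big_seq.
  by apply: bigsetU_measurable => B _; apply: EB_meas H kn.
have part1 : P (recent_record X k j n) = (\sum_(1 <= i <oo) (rterm p k j i)%:E)%E.
  have -> : recent_record X k j n = \bigcup_(i in setT) F i.
    by apply/seteqP; split => t; [move=> h; exists (X n t) | move=> [i _ []]].
  rewrite measure_bigcup //; last by move=> a b _ _ [t [[/= <- _] [/= <- _]]].
  rewrite (@eq_eseriesl R (fun i => i \in setT) (fun=> true)); last by move=> i; rewrite in_setT.
  rewrite (@nneseries_split R _ 0 1); last by move=> *.
  rewrite add0n big_nat1.
  rewrite -[RHS]add0e; congr (_ + _)%E.
    apply: (subset_measure0 (B := X n @^-1` [set 0%N])) => //.
    - by apply: mX; exact: leq_ltn_trans kn.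
    - by move=> t [].
    - by apply: X0; exact: leq_ltn_trans kn.
  apply: congr_lim; apply/funext => N; apply: eq_big_nat => i /andP [i0 _].
  exact: (@key _ _ _ P X p k j n i H kn i0).
split => // i i0.
by rewrite /= (@key _ _ _ P X p k j n i H kn i0) part1.
Qed.
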